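(* Let $X$ be a complex Banach space with open unit ball $B$, let $H(B)$ be a uniform algebra with $A_u(B)\subseteq H(B)\subseteq H^\infty(B)$, let $x_0^{**}\in\bar B^{**}$ and $f\in H(B)$. If $\hat f$ is constant on $M^{\mathcal P}_{x_0^{**}}$, say $\hat f(M^{\mathcal P}_{x_0^{**}})=\{\lambda\}$, then every net $(x_\alpha)\subset B$ converging to $x_0^{**}$ in $w(X^{**},P(X))$ satisfies $\lim_\alpha f(x_\alpha)=\lambda$.
   Context: $H^\infty(B)$: bounded holomorphic functions on $B$ with sup norm; $A_u(B)$: uniformly continuous holomorphic functions on $B$ (uniform closure of the continuous polynomials $P(X)$ on $B$); a uniform algebra between them is a closed unital subalgebra of $H^\infty(B)$ containing $A_u(B)$. $M_{H(B)}$ is its spectrum, $\hat f$ the Gelfand transform. $\bar B^{**}$ is the closed unit ball of $X^{**}$; $\tilde P$ (resp. $\tilde g$) is the Aron–Berner extension of $P\in P(X)$ (resp. $g\in A_u(B)$, extended continuously to $\bar B^{**}$). $w(X^{**},P(X))$ is the weakest topology on $X^{**}$ making all $\tilde P$ continuous. The polynomial fiber is $M^{\mathcal P}_{x_0^{**}}=\{\tau\in M_{H(B)}:\tau(g)=\tilde g(x_0^{**})\ \forall g\in A_u(B)\}$. *)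

(* Defs.v *)
From HB Require Import structures.
From mathcomp Require Import all_boot all_order all_algebra.
From mathcomp Require Import reals.
From mathcomp Require Import complex.
Set Implicit Arguments. Unset Strict Implicit. Unset Printing Implicit Defensive.
Import Order.TTheory GRing.Theory Num.Theory.
Local Open Scope ring_scope.

Definition cR {R : realType} (r : R) : R[i] := Complex r 0.

Section Banach.
Variables (R : realType) (X : lmodType R[i]) (nrm : X -> R).
Local Notation C := R[i].

Definition is_norm : Prop :=
  [/\ forall x, 0 <= nrm x,
      forall x, nrm x = 0 -> x = 0,
      forall (a : C) x, cR (nrm (a *: x)) = `|a| * cR (nrm x)
    & forall x y, nrm (x + y) <= nrm x + nrm y].

Definition complete_norm : Prop :=
  forall u : nat -> X,
    (forall e : R, 0 < e -> exists N, forall m n, (N <= m)%N -> (N <= n)%N ->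
        nrm (u m - u n) < e) ->
    exists l, forall e : R, 0 < e -> exists N, forall n, (N <= n)%N -> nrm (u n - l) < e.

Definition Ball := {x : X | nrm x < 1}.

Definition dual_el (phi : X -> C) : Prop :=
  (forall (a : C) x y, phi (a *: x + y) = a * phi x + phi y) /\
  exists M : R, forall x, `|phi x| <= cR (M * nrm x).

(* elements of the closed unit ball of X^** : z acts on functionals;
   linear on X^* and of norm <= 1, i.e. |z phi| <= M whenever M >= 0 bounds
   phi on the unit ball. *)
Definition bidual_ball (z : (X -> C) -> C) : Prop :=
  (forall (a : C) phi psi, dual_el phi -> dual_el psi ->
      z (fun x => a * phi x + psi x) = a * z phi + z psi) /\
  (forall phi (M : R), dual_el phi -> 0 <= M ->
      (forall x, `|phi x| <= cR (M * nrm x)) -> `|z phi| <= cR M).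

Definition emb (x : X) : (X -> C) -> C := fun phi => phi x.

(* m-linear forms, represented on argument lists of length m *)
Definition mlin (m : nat) (A : seq X -> C) : Prop :=
  forall s1 s2, (size s1 + (size s2).+1)%N = m ->
    forall (a : C) x y,
      A (s1 ++ (a *: x + y) :: s2) = a * A (s1 ++ x :: s2) + A (s1 ++ y :: s2).
Definition msym (m : nat) (A : seq X -> C) : Prop :=
  forall s t, size s = m -> perm_eq s t -> A s = A t.
Definition mbdd (m : nat) (A : seq X -> C) : Prop :=
  exists M : R, forall s, size s = m -> `|A s| <= cR (M * \prod_(x <- s) nrm x).
Definition msymform (m : nat) (A : seq X -> C) : Prop :=
  [/\ mlin m A, msym m A & mbdd m A].

Definition form0 : seq X -> C := fun _ => 0.

(* P is a continuous polynomial, P = sum_m \hat A_m, with A_m the symmetric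
   continuous m-linear form given by the m-th entry of As *)
Definition poly_rep (P : X -> C) (As : seq (seq X -> C)) : Prop :=
  (forall i, (i < size As)%N -> msymform i (nth form0 As i)) /\
  forall x, P x = \sum_(i < size As) nth form0 As i (nseq i x).

Definition is_poly (P : X -> C) : Prop := exists As, poly_rep P As.

(* Aron--Berner extension of an m-linear form evaluated at (z,...,z):
   z(x1 |-> z(x2 |-> ... z(xm |-> A [x1;...;xm]))) *)
Fixpoint ABnest (z : (X -> C) -> C) (n : nat) (F : seq X -> C) : C :=
  match n with
  | 0 => F [::]
  | n'.+1 => z (fun x => ABnest z n' (fun s => F (x :: s)))
  end.

Definition ABpoly (As : seq (seq X -> C)) (z : (X -> C) -> C) : C :=
  \sum_(i < size As) ABnest z i (nth form0 As i).

Definition Au (g : Ball -> C) : Prop :=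
  forall e : R, 0 < e -> exists P, is_poly P /\ forall x : Ball, `|g x - P (val x)| < cR e.

(* \tilde g (z) = v : the (continuous) extension of g in A_u(B) to the closed
   ball of X^**, as the limit of \tilde P_n(z) for polynomials P_n -> g
   uniformly on B *)
Definition AB_Au (g : Ball -> C) (z : (X -> C) -> C) (v : C) : Prop :=
  forall (Ps : nat -> X -> C) (Ass : nat -> seq (seq X -> C)),
    (forall n, poly_rep (Ps n) (Ass n)) ->
    (forall e : R, 0 < e -> exists N, forall n, (N <= n)%N ->
        forall x : Ball, `|g x - Ps n (val x)| < cR e) ->
    forall e : R, 0 < e -> exists N, forall n, (N <= n)%N ->
        `|ABpoly (Ass n) z - v| < cR e.

Definition holo (f : Ball -> C) : Prop :=
  forall x : Ball, exists L, dual_el L /\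
    forall e : R, 0 < e -> exists d : R, 0 < d /\ forall y : Ball,
      nrm (val y - val x) < d ->
      `|f y - f x - L (val y - val x)| <= cR (e * nrm (val y - val x)).
Definition Hinf (f : Ball -> C) : Prop :=
  (exists M : R, forall x, `|f x| <= cR M) /\ holo f.

Definition uniform_algebra (H : (Ball -> C) -> Prop) : Prop :=
  (forall f, Au f -> H f) /\
  (forall f, H f -> Hinf f) /\
  H (fun _ => 1) /\
  (forall (a : C) f g, H f -> H g -> H (fun x => a * f x + g x)) /\
  (forall f g, H f -> H g -> H (fun x => f x * g x)) /\
  (forall f, (forall e : R, 0 < e -> exists g, H g /\
                    forall x, `|f x - g x| < cR e) -> H f).

Definition spectrum (H : (Ball -> C) -> Prop) (tau : (Ball -> C) -> C) : Prop :=
  [/\ forall (a : C) f g, H f -> H g ->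
        tau (fun x => a * f x + g x) = a * tau f + tau g,
      forall f g, H f -> H g -> tau (fun x => f x * g x) = tau f * tau g
    & tau (fun _ => 1) = 1].

Definition poly_fiber (H : (Ball -> C) -> Prop) (z : (X -> C) -> C)
    (tau : (Ball -> C) -> C) : Prop :=
  spectrum H tau /\ forall g, Au g -> forall v, AB_Au g z v -> tau g = v.

End Banach.

Definition directed {I : Type} (le : I -> I -> Prop) : Prop :=
  [/\ inhabited I, forall a, le a a, (forall a b c, le a b -> le b c -> le a c)
    & forall a b, exists c, le a c /\ le b c].

Definition net_conv {R : realType} {I : Type} (le : I -> I -> Prop)
    (u : I -> R[i]) (l : R[i]) : Prop :=
  forall e : R, 0 < e -> exists a0, forall a, le a0 a -> `|u a - l| < cR e.

(* convergence x_a -> z in w(X^**, P(X)): \tilde P (x_a) -> \tilde P (z)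
   for every continuous polynomial P *)
Definition wP_conv {R : realType} {X : lmodType R[i]} (nrm : X -> R)
    {I : Type} (le : I -> I -> Prop) (x : I -> X) (z : (X -> R[i]) -> R[i]) : Prop :=
  forall P As, poly_rep nrm P As ->
    net_conv le (fun a => ABpoly As (emb (x a))) (ABpoly As z).

(* Main.v *)
Require Import Defs.
From HB Require Import structures.
From mathcomp Require Import all_boot all_order all_algebra.
From mathcomp Require Import reals complex.
From mathcomp Require Import all_classical all_reals topology normedtype.
From mathcomp Require Import lra.
Import Order.TTheory GRing.Theory Num.Theory.
Import numFieldNormedType.Exports.
Local Open Scope classical_set_scope.
Local Open Scope ring_scope.

Lemma ultra_fmap {T V : Type} (f : T -> V) (F : set_system T) :
  UltraFilter F -> UltraFilter (fmap f F).
Proof.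
move=> FU; split; first exact: fmap_proper_filter.
move=> G GF sFG; rewrite predeqE => A; split; last exact: sFG.
move=> GA; have [//|FnA] := in_ultra_setVsetC (f @^-1` A) FU.
have GnA : G (~` A) by apply: sFG.
by have /filter_ex [? []] : G (A `&` ~` A) by exact: filterI.
Qed.

Lemma ultra_bdd_cvg (R : realType) (T : Type) (U : set_system T)
  (HU : UltraFilter U) (u : T -> R) (M : R) :
  (forall a, `|u a| <= M) -> exists p : R, u @ U --> p.
Proof.
move=> Hb.
have UF : UltraFilter (fmap u U) by exact: ultra_fmap.
have PF : ProperFilter (fmap u U) by exact: ultra_proper.
have Hs : (fmap u U) `[-M, M]%classic.
  rewrite /fmap /=. apply: filterS (@filterT _ U _). move=> a _ /=.
  by rewrite in_itv /= -ler_norml Hb.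
have [p [_ Hp]] := @segment_compact R (-M) M _ PF Hs.
exists p; move: Hp; rewrite ultra_cvg_clusterE //.
Qed.

Section Bridge.
Variable R : realType.

Lemma normcR (k : R) : `|cR k| = cR `|k|.
Proof.
rewrite normc_def /cR /=. congr (Complex _ _).
by rewrite expr0n /= addr0 sqrtr_sqr.
Qed.

Lemma normRe_le (z : R[i]) : `|complex.Re z| <= complex.Re `|z|.
Proof.
rewrite normc_def /= -sqrtr_sqr ler_wsqrtr // ?sqr_ge0 //.
by rewrite lerDl sqr_ge0.
Qed.

Lemma normIm_le (z : R[i]) : `|complex.Im z| <= complex.Re `|z|.
Proof.
rewrite normc_def /= -sqrtr_sqr ler_wsqrtr // ?sqr_ge0 //.
by rewrite lerDr sqr_ge0.
Qed.

Lemma ltcR' (a b : R) : (cR a < cR b) = (a < b).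
Proof. exact: ltcR. Qed.

Lemma normc_Re (z : R[i]) : `|z| = cR (complex.Re `|z|).
Proof. by rewrite normc_def. Qed.

Lemma norm_lt_Re (z : R[i]) (r : R) : `|z| < cR r -> `|complex.Re z| < r.
Proof.
rewrite normc_Re ltcR' => h; exact: le_lt_trans (normRe_le z) h.
Qed.

Lemma norm_lt_Im (z : R[i]) (r : R) : `|z| < cR r -> `|complex.Im z| < r.
Proof.
rewrite normc_Re ltcR' => h; exact: le_lt_trans (normIm_le z) h.
Qed.

Lemma norm_le_ReIm (z : R[i]) : `|z| <= cR (`|complex.Re z| + `|complex.Im z|).
Proof.
rewrite {1}(complexE z).
apply: le_trans (ler_normD _ _) _.
rewrite normrM.
have -> : `|'i%C| = 1 :> R[i].
  by rewrite normc_def /= expr0n /= add0r expr1n sqrtr1.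
rewrite mul1r.
have := normcR (complex.Re z); rewrite /cR => ->.
have := normcR (complex.Im z); rewrite /cR => ->.
by rewrite /cR le_eqVlt; apply/orP; left; rewrite eq_complex /= addr0 !eqxx.
Qed.

Lemma ReIm_lt_norm (z : R[i]) (r : R) :
  `|complex.Re z| < r / 2 -> `|complex.Im z| < r / 2 -> `|z| < cR r.
Proof.
move=> h1 h2; apply: le_lt_trans (norm_le_ReIm z) _.
rewrite ltcR' [r](splitr r); exact: ltrD.
Qed.

End Bridge.

Section Ultra.
Variables (R : realType) (T : Type) (U : set_system T).
Hypothesis HU : UltraFilter U.

Let PU : ProperFilter U := ultra_proper.

Definition cv (u : T -> R[i]) (l : R[i]) : Prop :=
  (fun a => complex.Re (u a)) @ U --> complex.Re l /\
  (fun a => complex.Im (u a)) @ U --> complex.Im l.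

Definition ul (u : T -> R[i]) : R[i] :=
  Complex (lim ((fun a => complex.Re (u a)) @ U))
          (lim ((fun a => complex.Im (u a)) @ U)).

Lemma ulE u l : cv u l -> ul u = l.
Proof.
case: l => p q [h1 h2].
by rewrite /ul (cvg_lim (@Rhausdorff R) h1) (cvg_lim (@Rhausdorff R) h2).
Qed.

Lemma ul_cv u (M : R) : (forall a, `|u a| <= cR M) -> cv u (ul u).
Proof.
move=> Hb.
have [p hp] : exists p : R, (fun a => complex.Re (u a)) @ U --> p.
  apply: (@ultra_bdd_cvg R T U HU _ M) => a.
  refine (le_trans (normRe_le _ (u a)) _).
  by have := Hb a; rewrite normc_Re /cR lecR.
have [q hq] : exists q : R, (fun a => complex.Im (u a)) @ U --> q.
  apply: (@ultra_bdd_cvg R T U HU _ M) => a.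
  apply: (le_trans (normIm_le _ (u a))).
  by have := Hb a; rewrite normc_Re /cR lecR.
by rewrite (@ulE u (Complex p q)).
Qed.

Lemma cv_cst c : cv (fun _ => c) c.
Proof. by split; apply: cvg_cst. Qed.

Lemma cv_lin (c : R[i]) u v l m : cv u l -> cv v m ->
  cv (fun a => c * u a + v a) (c * l + m).
Proof.
case: c => cr ci; case: l => lr li; case: m => mr mi; case=> /= hu1 hu2 [/= hv1 hv2].
split.
- have -> : (fun a => complex.Re (Complex cr ci * u a + v a)) =
     ((fun a => cr * complex.Re (u a)) - (fun a => ci * complex.Im (u a))) +
      (fun a => complex.Re (v a)).
    apply: funext => a; rewrite -[RHS]/(cr * complex.Re (u a) - ci * complex.Im (u a) + complex.Re (v a)).
    by case: (u a) => ur ui; case: (v a) => vr vi.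
  rewrite -[complex.Re _]/(cr * lr - ci * li + mr).
  apply: cvgD => //; apply: cvgB; apply: cvgM => //; exact: cvg_cst.
- have -> : (fun a => complex.Im (Complex cr ci * u a + v a)) =
     ((fun a => cr * complex.Im (u a)) + (fun a => ci * complex.Re (u a))) +
      (fun a => complex.Im (v a)).
    apply: funext => a; rewrite -[RHS]/(cr * complex.Im (u a) + ci * complex.Re (u a) + complex.Im (v a)).
    by case: (u a) => ur ui; case: (v a) => vr vi.
  rewrite -[complex.Im _]/(cr * li + ci * lr + mi).
  apply: cvgD => //; apply: cvgD; apply: cvgM => //; exact: cvg_cst.
Qed.

Lemma cv_mul u v l m : cv u l -> cv v m ->
  cv (fun a => u a * v a) (l * m).
Proof.
case: l => lr li; case: m => mr mi; case=> /= hu1 hu2 [/= hv1 hv2].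
split.
- have -> : (fun a => complex.Re (u a * v a)) =
     ((fun a => complex.Re (u a) * complex.Re (v a)) -
      (fun a => complex.Im (u a) * complex.Im (v a))).
    apply: funext => a; rewrite -[RHS]/(complex.Re (u a) * complex.Re (v a) - complex.Im (u a) * complex.Im (v a)).
    by case: (u a) => ur ui; case: (v a) => vr vi.
  rewrite -[complex.Re _]/(lr * mr - li * mi).
  by apply: cvgB; apply: cvgM.
- have -> : (fun a => complex.Im (u a * v a)) =
     ((fun a => complex.Re (u a) * complex.Im (v a)) +
      (fun a => complex.Im (u a) * complex.Re (v a))).
    apply: funext => a; rewrite -[RHS]/(complex.Re (u a) * complex.Im (v a) + complex.Im (u a) * complex.Re (v a)).
    by case: (u a) => ur ui; case: (v a) => vr vi.
  rewrite -[complex.Im _]/(lr * mi + li * mr).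
  by apply: cvgD; apply: cvgM.
Qed.

Lemma cv_eps u l : (forall r : R, 0 < r -> U [set a | `|u a - l| < cR r]) -> cv u l.
Proof.
move=> H; split; apply/cvgrPdist_lt => eps eps0;
  apply: filterS (H eps eps0) => a /=; case: l {H} => lr li; case: (u a) => ur ui h.
- apply: (@norm_lt_Re R (Complex lr li - Complex ur ui)); by rewrite distrC.
- apply: (@norm_lt_Im R (Complex lr li - Complex ur ui)); by rewrite distrC.
Qed.

Lemma cv_epsE u l : cv u l -> forall r : R, 0 < r -> U [set a | `|u a - l| < cR r].
Proof.
case=> h1 h2 r r0.
have r20 : 0 < r / 2 by rewrite divr_gt0.
move/cvgrPdist_lt: h1 => /(_ _ r20) h1.
move/cvgrPdist_lt: h2 => /(_ _ r20) h2.
apply: filterS (filterI h1 h2) => a /=; case: l {h1 h2} => lr li;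
  case: (u a) => ur ui /= [e1 e2].
apply: ReIm_lt_norm => /=; by rewrite distrC.
Qed.

End Ultra.
Arguments cv {R T} U u l.
Arguments ul {R T} U u.
Arguments ulE {R T U}.
Arguments ul_cv {R T U}.
Arguments cv_cst {R T U}.
Arguments cv_lin {R T U}.
Arguments cv_mul {R T U}.
Arguments cv_eps {R T U}.
Arguments cv_epsE {R T U}.

Lemma ABnest_emb (R : realType) (X : lmodType R[i]) (y : X) n F :
  ABnest (emb y) n F = F (nseq n y).
Proof. by elim: n F => [|n IH] F //=; rewrite /emb IH. Qed.

Lemma ABpoly_emb (R : realType) (X : lmodType R[i]) (nrm : X -> R) P As y :
  poly_rep nrm P As -> ABpoly As (emb y) = P y.
Proof.
case=> _ hP; rewrite hP /ABpoly; apply: eq_bigr => i _.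
exact: ABnest_emb.
Qed.

Lemma small_inv (R : realType) (e : R) : 0 < e ->
  exists N, forall n, (N <= n)%N -> n.+1%:R^-1 < e.
Proof.
move=> e0; exists (Num.Def.trunc e^-1) => n hn.
rewrite invf_plt ?posrE ?invr_gt0 //.
apply: lt_le_trans (truncnS_gt _) _.
by rewrite ler_nat ltnS.
Qed.

Lemma cR3 (R : realType) (r : R) : cR (r / 3) + cR (r / 3) + cR (r / 3) = cR r.
Proof.
apply/eqP; rewrite /cR eq_complex /= !addr0 eqxx andbT; apply/eqP; lra.
Qed.

Theorem mainTheorem2 (R : realType) (X : lmodType R[i]) (nrm : X -> R)
  (Hnorm : is_norm nrm) (Hcompl : complete_norm nrm)
  (H : (Ball nrm -> R[i]) -> Prop) (HH : uniform_algebra H)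
  (x0 : (X -> R[i]) -> R[i]) (Hx0 : bidual_ball nrm x0)
  (f : Ball nrm -> R[i]) (Hf : H f) (lam : R[i])
  (Hconst : (exists tau, poly_fiber H x0 tau) /\
            (forall tau, poly_fiber H x0 tau -> tau f = lam))
  (I : Type) (le : I -> I -> Prop) (Hdir : directed le)
  (x : I -> Ball nrm) (Hconv : wP_conv nrm le (fun a => val (x a)) x0) :
  net_conv le (fun a => f (x a)) lam.
Proof.
move=> e e0; apply: contrapT => Hne.
have Hbad : forall a0, exists a, le a0 a /\ ~ (`|f (x a) - lam| < cR e).
  move=> a0; apply: contrapT => hn; apply: Hne; exists a0 => a ha.
  by apply: contrapT => hlt; apply: hn; exists a.
case: Hdir => [[i0] Hrefl Htrans Hup].
pose B := fun a0 => [set a | le a0 a /\ ~ (`|f (x a) - lam| < cR e)].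
have FF : Filter (filter_from setT B).
  apply: filter_from_filter; first by exists i0.
  move=> i j _ _; have [c [hic hjc]] := Hup i j; exists c => // a [hca hb].
  by split; split => //; apply: Htrans hca.
have PF : ProperFilter (filter_from setT B).
  by apply: filter_from_proper => i _; have [a [h1 h2]] := Hbad i; exists a.
have [U [HU sFU]] := ultraFilterLemma PF.
have PU : ProperFilter U := @ultra_proper _ _ HU.
have tail : forall a0, U [set a | le a0 a].
  by move=> a0; apply: sFU; exists a0 => // a [].
have badU : U [set a | ~ (`|f (x a) - lam| < cR e)].
  by apply: sFU; exists i0 => // a [].
case: HH => [HAu [HHinf [H1 [Hlin [Hmul Hclos]]]]].
have Hbd : forall g, H g -> exists M, forall a, `|g (x a)| <= cR M.
  by move=> g /HHinf [[M hM] _]; exists M => a; apply: hM.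
pose tau := fun g : Ball nrm -> R[i] => ul U (fun a => g (x a)).
have Hcv : forall g, H g -> cv U (fun a => g (x a)) (tau g).
  by move=> g /Hbd [M hM]; exact: (ul_cv HU _ M hM).
have Htau : poly_fiber H x0 tau.
  split; first split.
  - move=> c g h Hg Hh; apply: (ulE HU).
    exact: (cv_lin HU c _ _ _ _ (Hcv g Hg) (Hcv h Hh)).
  - move=> g h Hg Hh; apply: (ulE HU).
    exact: (cv_mul HU _ _ _ _ (Hcv g Hg) (Hcv h Hh)).
  - exact: (ulE HU _ _ (cv_cst HU 1)).
  move=> g Ag v Hv; apply: (ulE HU); apply: (cv_eps HU) => r r0.
  have r30 : 0 < r / 3 by rewrite divr_gt0.
  have hex : forall n : nat, exists PA : (X -> R[i]) * seq (seq X -> R[i]),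
      poly_rep nrm PA.1 PA.2 /\
      forall y : Ball nrm, `|g y - PA.1 (val y)| < cR (n.+1%:R^-1).
    move=> n; have [P [[As HAs] Happ]] := Ag (n.+1%:R^-1) (ltac:(by rewrite invr_gt0)).
    by exists (P, As).
  have [PA HPA] := choice hex.
  have Hunif : forall e : R, 0 < e -> exists N, forall n, (N <= n)%N ->
      forall y : Ball nrm, `|g y - (PA n).1 (val y)| < cR e.
    move=> e' e'0; have [N hN] := small_inv _ _ e'0; exists N => n hn y.
    apply: lt_trans ((HPA n).2 y) _; rewrite ltcR; exact: hN.
  have [N1 hN1] := Hv (fun n => (PA n).1) (fun n => (PA n).2)
     (fun n => (HPA n).1) Hunif (r / 3) r30.
  have [N2 hN2] := Hunif (r / 3) r30.
  pose n := maxn N1 N2.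
  have [a0 ha0] := Hconv (PA n).1 (PA n).2 (HPA n).1 (r / 3) r30.
  apply: filterS (tail a0) => a /= ha.
  have h1 := hN2 n (leq_maxr _ _) (x a).
  have h2 := ha0 a ha; rewrite /= (ABpoly_emb _ _ _ _ _ _ (HPA n).1) in h2.
  have h3 := hN1 n (leq_maxl _ _).
  have -> : g (x a) - v = (g (x a) - (PA n).1 (val (x a))) +
      ((PA n).1 (val (x a)) - ABpoly (PA n).2 x0) + (ABpoly (PA n).2 x0 - v).
    by rewrite !addrA !subrK.
  rewrite -cR3; apply: le_lt_trans (ler_normD _ _) _.
  apply: ltrD => //; apply: le_lt_trans (ler_normD _ _) _.
  exact: ltrD.
have Htf := Hconst.2 tau Htau.
have cvf : cv U (fun a => f (x a)) lam by rewrite -Htf; exact: Hcv.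
have hgood := cv_epsE HU _ _ cvf e e0.
by have [a [ha hb]] := filter_ex (filterI hgood badU).
Qed.
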